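(* Let $\mathcal{A}_l\subseteq\mathcal{A}$ be nonempty and $\alpha\in[0,1)$. Consider $$\mathcal{P}(\mathcal{A}_l,\alpha)=\min_{H\succ0}\ -\log\det(H)\quad\text{s.t.}\quad(1-\alpha)a^\top Ha+\alpha\,\mathrm{Tr}(V_{\pi_{\mathrm{off}}}H)\le d\ \ \forall a\in\mathcal{A}_l,$$ and $$\mathcal{D}(\mathcal{A}_l,\alpha)=\max_{\pi\in\Delta(\mathcal{A}_l)}\log\det\big((1-\alpha)V_\pi+\alpha V_{\pi_{\mathrm{off}}}\big).$$ Then $\mathcal{P}(\mathcal{A}_l,\alpha)=\mathcal{D}(\mathcal{A}_l,\alpha)$.
   Context: $\mathcal{A}\subset\mathbb{R}^d$ is a finite set with $\mathrm{span}(\mathcal{A})=\mathbb{R}^d$; $\pi_{\mathrm{off}}\in\Delta(\mathcal{A})$; $\Delta(\mathcal{B})$ is the probability simplex over $\mathcal{B}$; $V_\pi=\sum_a\pi(a)aa^\top$. *)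

(* Defs.v *)
From HB Require Import structures.
From mathcomp Require Import all_boot all_order all_algebra.
From mathcomp Require Import all_classical all_reals all_analysis.
Set Implicit Arguments. Unset Strict Implicit. Unset Printing Implicit Defensive.
Import Order.TTheory GRing.Theory Num.Theory.
Local Open Scope ring_scope.
Local Open Scope classical_set_scope.

(* Vectors of R^d are row vectors 'rV[R]_d; a a^T (outer product) is a^T *m a. *)

(* V_pi = sum_a pi(a) a a^T, the action set indexed by 'I_n via a : 'I_n -> 'rV_d *)
Definition Vmat (R : realType) (d n : nat) (a : 'I_n -> 'rV[R]_d)
  (pi : 'I_n -> R) : 'M[R]_d :=
  \sum_(i < n) pi i *: ((a i)^T *m a i).

Definition in_simplex (n : nat) (R : realType) (S : {set 'I_n}) (pi : 'I_n -> R) : Prop :=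
  (forall i, 0 <= pi i) /\ (forall i, i \notin S -> pi i = 0) /\
  \sum_(i < n) pi i = 1.

Definition posdef (R : realType) (d : nat) (H : 'M[R]_d) : Prop :=
  H^T = H /\ forall x : 'rV[R]_d, x != 0 -> 0 < (x *m H *m x^T) 0 0.

(* log det with the convention log det M = -oo when det M <= 0 (singular PSD M) *)
Definition logdetE (R : realType) (d : nat) (M : 'M[R]_d) : \bar R :=
  if 0 < \det M then (ln (\det M))%:E else -oo%E.

Definition primal_feasible (R : realType) (d n : nat) (a : 'I_n -> 'rV[R]_d)
  (pioff : 'I_n -> R) (Al : {set 'I_n}) (alpha : R) (H : 'M[R]_d) : Prop :=
  posdef H /\
  forall i, i \in Al ->
    (1 - alpha) * (a i *m H *m (a i)^T) 0 0 + alpha * \tr (Vmat a pioff *m H)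
      <= d%:R.

Definition primal_value (R : realType) (d n : nat) (a : 'I_n -> 'rV[R]_d)
  (pioff : 'I_n -> R) (Al : {set 'I_n}) (alpha : R) : \bar R :=
  ereal_inf [set ((- ln (\det H))%:E) | H in primal_feasible a pioff Al alpha].

Definition dual_value (R : realType) (d n : nat) (a : 'I_n -> 'rV[R]_d)
  (pioff : 'I_n -> R) (Al : {set 'I_n}) (alpha : R) : \bar R :=
  ereal_sup [set logdetE ((1 - alpha) *: Vmat a pi + alpha *: Vmat a pioff)
            | pi in in_simplex Al].

(* Main.v *)
Require Import Defs.
From HB Require Import structures.
From mathcomp Require Import all_boot all_order all_algebra.
From mathcomp Require Import all_classical all_reals all_analysis.
From mathcomp Require Import ring lra.
Set Implicit Arguments. Unset Strict Implicit. Unset Printing Implicit Defensive.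
Import Order.TTheory GRing.Theory Num.Theory.
Local Open Scope ring_scope.
Section QF.
Variable R : realType.

Definition bf (d : nat) (A : 'M[R]_d) (x y : 'rV[R]_d) : R := (x *m A *m y^T) 0 0.
Definition psd (d : nat) (A : 'M[R]_d) := forall x, 0 <= bf A x x.

Lemma bfE d (A : 'M[R]_d) x y :
  bf A x y = \sum_i \sum_j x 0 i * A i j * y 0 j.
Proof.
rewrite /bf mxE; rewrite exchange_big /=; apply: eq_bigr => j _.
rewrite mxE mulr_suml; apply: eq_bigr => i _; rewrite !mxE.
by [].
Qed.

Lemma symE d (A : 'M[R]_d) i j : A^T = A -> A j i = A i j.
Proof. by move=> hA; rewrite -[in LHS]hA mxE. Qed.

Lemma bf_sym d (A : 'M[R]_d) x y : A^T = A -> bf A x y = bf A y x.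
Proof.
move=> hA; rewrite !bfE exchange_big; apply: eq_bigr => i _; apply: eq_bigr => j _.
by rewrite (symE i j hA); ring.
Qed.

Lemma bfDl d (A : 'M[R]_d) x y z : bf A (x + y) z = bf A x z + bf A y z.
Proof. by rewrite /bf !mulmxDl mxE. Qed.
Lemma bfDr d (A : 'M[R]_d) x y z : bf A z (x + y) = bf A z x + bf A z y.
Proof. by rewrite /bf linearD /= !mulmxDr mxE. Qed.
Lemma bfZl d (A : 'M[R]_d) t x z : bf A (t *: x) z = t * bf A x z.
Proof. by rewrite /bf -!scalemxAl mxE. Qed.
Lemma bfZr d (A : 'M[R]_d) t x z : bf A z (t *: x) = t * bf A z x.
Proof. by rewrite /bf linearZ /= -!scalemxAr mxE. Qed.

Lemma bf_exp d (A : 'M[R]_d) s t x y : A^T = A ->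
  bf A (s *: x + t *: y) (s *: x + t *: y) =
  s ^+ 2 * bf A x x + 2 * s * t * bf A x y + t ^+ 2 * bf A y y.
Proof.
move=> hA; rewrite !(bfDl, bfDr, bfZl, bfZr) (bf_sym y x hA); ring.
Qed.

Lemma psd_cs d (A : 'M[R]_d) x y : A^T = A -> psd A ->
  bf A x y ^+ 2 <= bf A x x * bf A y y.
Proof.
move=> hA hP; set p := bf A x x; set q := bf A y y; set b := bf A x y.
have hp : 0 <= p by apply: hP.
have hq : 0 <= q by apply: hP.
have h1 := hP (q *: x + (- b) *: y); rewrite bf_exp // -/p -/q -/b in h1.
have h2 := hP (b *: x + (- (p + 1)) *: y); rewrite bf_exp // -/p -/q -/b in h2.
have [q0|qpos] := eqVneq q 0.
  rewrite q0 in h2 *; nra.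
have qp : 0 < q by rewrite lt_def qpos hq.
have : 0 <= q * (q * p - b ^+ 2) by nra.
rewrite pmulr_rge0 // subr_ge0 => h; nra.
Qed.

Definition ev d (k : 'I_d) : 'rV[R]_d := delta_mx 0 k.

Lemma bf_ev d (A : 'M[R]_d) i j : bf A (ev i) (ev j) = A i j.
Proof.
rewrite bfE (bigD1 i) //= [X in _ + X]big1 => [|k hk]; last first.
  by apply: big1 => l _; rewrite !mxE (negbTE hk) andbF !mul0r.
rewrite addr0 (bigD1 j) //= [X in _ + X]big1 => [|k hk]; last by rewrite !mxE (negbTE hk) andbF mulr0.
by rewrite !mxE !eqxx /= mul1r mulr1 addr0.
Qed.

Lemma bf_evr d (A : 'M[R]_d) x j : bf A x (ev j) = (x *m A) 0 j.
Proof.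
rewrite bfE mxE; apply: eq_bigr => i _.
rewrite (bigD1 j) //= [X in _ + X]big1 => [|k hk]; last by rewrite !mxE (negbTE hk) andbF mulr0.
by rewrite !mxE !eqxx mulr1 addr0.
Qed.

End QF.
Section Chol.
Variable R : realType.

Lemma mx11_mul (u v : 'M[R]_1) : (u *m v) 0 0 = u 0 0 * v 0 0.
Proof. by rewrite mxE big_ord1. Qed.

Lemma tr11 m (x : 'M[R]_(1, m)) (y : 'M[R]_(m, 1)) : (x *m y) 0 0 = (y^T *m x^T) 0 0.
Proof. by rewrite -trmx_mul [RHS]mxE. Qed.

Lemma bf_outer d (u x y : 'rV[R]_d) :
  bf (u^T *m u) x y = (x *m u^T) 0 0 * (y *m u^T) 0 0.
Proof.
rewrite /bf !mulmxA -(mulmxA (x *m u^T)) mx11_mul; congr (_ * _).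
by rewrite tr11 trmxK.
Qed.

Lemma bf_sum d I (r : seq I) (P : pred I) (F : I -> 'M[R]_d) x y :
  bf (\sum_(i <- r | P i) F i) x y = \sum_(i <- r | P i) bf (F i) x y.
Proof.
rewrite /bf; elim/big_rec2: _ => [|i s M _ <-]; first by rewrite mulmx0 ?mul0mx mxE.
by rewrite mulmxDr mulmxDl mxE.
Qed.

Lemma bfD d (A B : 'M[R]_d) x y : bf (A + B) x y = bf A x y + bf B x y.
Proof. by rewrite /bf mulmxDr mulmxDl mxE. Qed.
Lemma bfN d (A : 'M[R]_d) x y : bf (- A) x y = - bf A x y.
Proof. by rewrite /bf mulmxN mulNmx mxE. Qed.
Lemma bfZ d (A : 'M[R]_d) c x y : bf (c *: A) x y = c * bf A x y.
Proof. by rewrite /bf -scalemxAr -scalemxAl mxE. Qed.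

Lemma chol_gen d (m : nat) : (m <= d)%N -> forall A : 'M[R]_d, A^T = A -> psd A ->
  (forall i j : 'I_d, (i < d - m)%N -> A i j = 0) ->
  exists l : 'I_d -> 'rV[R]_d,
    [/\ (forall j i : 'I_d, (i < j)%N -> l j 0 i = 0),
        (forall j : 'I_d, (j < d - m)%N -> l j = 0) &
        A = \sum_j (l j)^T *m l j].
Proof.
elim: m => [|m IH] hm A hA hP hS.
  exists (fun _ => 0); split => //; last first.
    rewrite big1 => [|j _]; last by rewrite mulmx0.
    by apply/matrixP => i j; rewrite hS ?mxE // subn0.
  by move=> j i _; rewrite mxE.
have kd : (d - m.+1 < d)%N by rewrite ltn_subrL; apply/andP; split; [|apply: leq_ltn_trans hm].
set k := (d - m.+1)%N in kd hS *.
have hk1 : (d - m = k.+1)%N by rewrite /k subnS prednK // subn_gt0.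
pose kk : 'I_d := Ordinal kd.
have hSc : forall i j : 'I_d, (j < k)%N -> A i j = 0.
  by move=> i j hj; rewrite -(symE _ _ hA) hS.
have hm' : (m <= d)%N by apply: ltnW.
have [A0|Apos] := eqVneq (A kk kk) 0.
  have rowk : forall j, A kk j = 0.
    move=> j; have := psd_cs (ev R kk) (ev R j) hA hP.
    rewrite !bf_ev A0 mul0r => h.
    by apply/eqP; rewrite -sqrf_eq0 eq_le h sqr_ge0.
  have hS1 : forall i j : 'I_d, (i < d - m)%N -> A i j = 0.
    move=> i j; rewrite hk1 ltnS leq_eqVlt => /orP[/eqP ei|]; last exact: hS.
    by have -> : i = kk by apply: val_inj.
  have [l [l1 l2 l3]] := IH hm' A hA hP hS1.
  exists l; split => // j hj; apply: l2; rewrite hk1; exact: ltnW.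
have Akpos : 0 < A kk kk by rewrite lt_def Apos -(bf_ev A kk kk) hP.
set s := (Num.sqrt (A kk kk))^-1.
have s2 : s ^+ 2 = (A kk kk)^-1 by rewrite /s exprVn sqr_sqrtr // ltW.
pose v : 'rV[R]_d := s *: row kk A.
have vE : forall i, v 0 i = s * A kk i by move=> i; rewrite !mxE.
pose A' := A - v^T *m v.
have A'E : forall i j, A' i j = A i j - s ^+ 2 * A kk i * A kk j.
  move=> i j; rewrite !mxE big_ord1 !mxE; ring.
have hA' : A'^T = A' by rewrite /A' linearB /= trmx_mul trmxK hA.
have hP' : psd A'.
  move=> x; rewrite /A' bfD bfN bf_outer.
  have -> : (x *m v^T) 0 0 = s * bf A x (ev R kk).
    rewrite bf_evr /v linearZ /= -scalemxAr mxE; congr (_ * _).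
    rewrite tr11 trmxK !mxE; apply: eq_bigr => i _; rewrite !mxE mulrC; congr (_ * _).
    by rewrite (symE _ _ hA).
  have h := psd_cs x (ev R kk) hA hP; rewrite bf_ev in h.
  rewrite subr_ge0 mulrACA -expr2 s2.
  rewrite -(ler_pM2r Akpos) mulrAC mulVf ?mul1r // -expr2 //.
have hS' : forall i j : 'I_d, (i < d - m)%N -> A' i j = 0.
  move=> i j; rewrite hk1 ltnS leq_eqVlt => /orP[/eqP ei|hi]; last first.
    by rewrite A'E hS // (symE _ _ hA) hS // mulr0 mul0r subr0.
  have -> : i = kk by apply: val_inj.
  rewrite A'E s2 mulVf // mul1r subrr //.
have [l [l1 l2 l3]] := IH hm' A' hA' hP' hS'.
exists (fun j => if j == kk then v else l j); split.
- move=> j i hij; case: eqP => [ej|_]; last exact: l1.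
  rewrite vE (symE _ _ hA) hS ?mulr0 //; by rewrite ej in hij.
- move=> j hj; case: eqP => [ej|_].
    by rewrite ej /= ltnn in hj.
  by apply: l2; rewrite hk1; apply: ltnW.
- rewrite (bigD1 kk) //= eqxx.
  rewrite (eq_bigr (fun j => (l j)^T *m l j)) => [|j /negbTE ->] //.
  have : A = A' + v^T *m v by rewrite /A' subrK.
  have lk : l kk = 0 by apply: l2; rewrite hk1.
  by move->; rewrite l3 (bigD1 kk) //= lk mulmx0 add0r addrC.
Qed.

Lemma chol d (A : 'M[R]_d) : A^T = A -> psd A ->
  exists l : 'I_d -> 'rV[R]_d,
    (forall j i : 'I_d, (i < j)%N -> l j 0 i = 0) /\ A = \sum_j (l j)^T *m l j.
Proof.
move=> hA hP; have hS : forall i j : 'I_d, (i < d - d)%N -> A i j = 0.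
  by move=> i j; rewrite subnn.
have [l [l1 _ l3]] := @chol_gen d d (leqnn d) A hA hP hS.
by exists l.
Qed.

End Chol.
Section Det.
Variable R : realType.

Lemma chol_mx d (A : 'M[R]_d) : A^T = A -> psd A ->
  exists L : 'M[R]_d, [/\ A = L^T *m L, \det L = \prod_j L j j &
     forall i, (L i i) ^+ 2 <= A i i].
Proof.
move=> hA hP; have [l [l1 l2]] := chol hA hP.
pose L := \matrix_(j, i) l j 0 i.
have AE : A = L^T *m L.
  rewrite l2; apply/matrixP => i j; rewrite summxE !mxE.
  by apply: eq_bigr => k _; rewrite !mxE big_ord1 !mxE.
exists L; split => //.
  rewrite -det_tr det_trig; first by apply: eq_bigr => i _; rewrite !mxE.
  by apply/is_trig_mxP => i j hij; rewrite !mxE l1.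
move=> i; rewrite AE [X in _ <= X]mxE (bigD1 i) //= [L^T i i]mxE -expr2 lerDl.
by apply: sumr_ge0 => j _; rewrite [L^T i j]mxE -expr2 sqr_ge0.
Qed.

Lemma psd_diag d (A : 'M[R]_d) i : psd A -> 0 <= A i i.
Proof. by move=> hP; rewrite -(bf_ev A i i). Qed.

Lemma psd_det_ge0 d (A : 'M[R]_d) : A^T = A -> psd A -> 0 <= \det A.
Proof.
move=> hA hP; have [L [AE dL _]] := chol_mx hA hP.
by rewrite AE det_mulmx det_tr -expr2 sqr_ge0.
Qed.

Lemma hadamard d (A : 'M[R]_d) : A^T = A -> psd A -> \det A <= \prod_i A i i.
Proof.
move=> hA hP; have [L [AE dL hL]] := chol_mx hA hP.
rewrite {1}AE det_mulmx det_tr dL -big_split /=.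
apply: ler_prod => i _; rewrite -expr2 sqr_ge0 /=; exact: hL.
Qed.

Lemma det_le1 d (A : 'M[R]_d) : A^T = A -> psd A -> \tr A <= d%:R -> \det A <= 1.
Proof.
move=> hA hP htr; apply: (le_trans (hadamard hA hP)).
have hE : {in predT, forall i, 0 <= A i i} by move=> i _; exact: psd_diag.
have := (leif_AGM hE).1; rewrite cardT size_enum_ord => h.
apply: (le_trans h); case: d A hA hP htr hE h => [|d] A hA hP htr hE h.
  by rewrite expr0.
apply: exprn_ile1.
  by apply: divr_ge0 => //; apply: sumr_ge0 => i _; exact: psd_diag.
by rewrite ler_pdivrMr ?ltr0Sn // mul1r.
Qed.

Lemma psd_null d (A : 'M[R]_d) x : A^T = A -> psd A -> bf A x x = 0 -> x *m A = 0.
Proof.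
move=> hA hP; have [l [_ l2]] := chol hA hP.
rewrite {1}l2 bf_sum => h0.
have hz : forall j, (x *m (l j)^T) 0 0 = 0.
  move=> j; apply/eqP; rewrite -sqrf_eq0; apply/eqP.
  move/eqP: h0; rewrite psumr_eq0 => [/allP h|k _]; last by rewrite bf_outer -expr2 sqr_ge0.
  by move: (h j (mem_index_enum j)); rewrite bf_outer -expr2 => /eqP.
rewrite l2 mulmx_sumr big1 // => j _; rewrite mulmxA.
have -> : x *m (l j)^T = 0 by apply/matrixP => i k; rewrite !ord1 hz mxE.
by rewrite mul0mx.
Qed.

Lemma posdef_det d (H : 'M[R]_d) : posdef H -> 0 < \det H.
Proof.
move=> [hH hP].
have hP' : psd H.
  move=> x; have [->|xn0] := eqVneq x 0; first by rewrite /bf mul0mx mul0mx mxE.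
  exact: ltW (hP x xn0).
rewrite lt_def psd_det_ge0 // andbT; apply/negP => /det0P [v vn0 vH].
by have := hP v vn0; rewrite vH mul0mx mxE ltxx.
Qed.

Lemma weak_dual d (M H : 'M[R]_d) : M^T = M -> psd M -> posdef H ->
  \tr (M *m H) <= d%:R -> \det M * \det H <= 1.
Proof.
move=> hM hPM hpd htr; have [hH hPH] := hpd.
have hP' : psd H.
  move=> x; have [->|xn0] := eqVneq x 0; first by rewrite /bf mul0mx mul0mx mxE.
  exact: ltW (hPH x xn0).
have [L [HE _ _]] := chol_mx hH hP'.
pose B := L *m M *m L^T.
have hB : B^T = B by rewrite /B !trmx_mul trmxK hM mulmxA.
have hPB : psd B.
  by move=> x; have := hPM (x *m L); rewrite /bf /B trmx_mul !mulmxA.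
have := det_le1 hB hPB.
rewrite /B mxtrace_mulC mulmxA -HE mxtrace_mulC => /(_ htr).
rewrite !det_mulmx det_tr HE det_mulmx det_tr.
by have -> : \det M * (\det L * \det L) = \det L * \det M * \det L by ring.
Qed.

End Det.
Section Poly.
Variable R : realType.

Lemma mdl d (u w : 'rV[R]_d) : \det (1%:M + u^T *m w) = 1 + (w *m u^T) 0 0.
Proof.
pose P1 : 'M[R]_(d + 1) := block_mx 1%:M 0 (- w) 1%:M.
pose P2 : 'M[R]_(d + 1) := block_mx 1%:M u^T 0 (1%:M + w *m u^T).
pose Q1 : 'M[R]_(d + 1) := block_mx (1%:M + u^T *m w) u^T 0 1%:M.
have E : P1 *m P2 = Q1 *m P1.
  rewrite /P1 /P2 /Q1 !mulmx_block.
  rewrite !(mul1mx, mulmx1, mul0mx, mulmx0, addr0, add0r).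
  rewrite mulmxN mulNmx; congr block_mx; first by rewrite -addrA subrr addr0.
  by rewrite addrCA addNr addr0.
have := congr1 determinant E.
rewrite !det_mulmx /P1 /P2 /Q1 det_lblock det_ublock det_ublock !det1 !mul1r.
rewrite mulr1 det_mx11 => h; rewrite -[LHS]mulr1 -h !mxE eqxx /=; by [].
Qed.

Lemma det_increase d (K : 'M[R]_d.+1) : 0 < \tr K ->
  exists2 t, 0 < t <= 1 & 1 < \det (1%:M + t *: K).
Proof.
move=> trK.
set p := char_poly (- K).
have pE : forall x : R, p.[x] = \det (x%:M + K).
  move=> x; rewrite /p /char_poly -horner_evalE -det_map_mx; congr (\det _).
  apply/matrixP => i j; rewrite !mxE.
  by rewrite raddfB raddfMn /= !horner_evalE hornerX hornerC opprK.
have sp : size p = d.+2 by rewrite size_char_poly.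
have pd : p`_d.+1 = 1 by have := char_poly_monic (- K); rewrite monicE lead_coefE sp => /eqP.
have pd1 : p`_d = \tr K by rewrite (char_poly_trace (- K)) //= linearN /= opprK.
set C := \sum_(i < d) `|p`_i|.
have C0 : 0 <= C by apply: sumr_ge0 => i _.
set T := \tr K.
have detE : forall t, 0 < t -> \det (1%:M + t *: K) = t ^+ d.+1 * p.[t^-1].
  move=> t t0; rewrite pE -detZ scalerDr scale_scalar_mx mulfV ?gt_eqF //.
have key : forall t, 0 < t <= 1 -> 1 + t * T - t ^+ 2 * C <= \det (1%:M + t *: K).
  move=> t /andP[t0 t1]; rewrite detE // horner_coef sp.
  rewrite !big_ord_recr /= pd pd1 !mulrDr.
  have -> : t ^+ d.+1 * (1 * t^-1 ^+ d.+1) = 1 by rewrite mul1r exprVn mulfV // expf_neq0 // gt_eqF.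
  have -> : t ^+ d.+1 * (T * t^-1 ^+ d) = t * T.
    rewrite exprVn exprS; field; by rewrite expf_neq0 // gt_eqF.
  suff hS : - (t ^+ 2 * C) <= t ^+ d.+1 * \sum_(i < d) p`_i * t^-1 ^+ i by lra.
  rewrite /C mulr_sumr -sumrN mulr_sumr; apply: ler_sum => i _.
  have -> : t ^+ d.+1 * (p`_i * t^-1 ^+ i) = p`_i * t ^+ (d.+1 - i).
    rewrite expfB; last by rewrite ltnS ltnW.
    by rewrite exprVn mulrCA.
  have hx : t ^+ (d.+1 - i) <= t ^+ 2.
    have -> : (d.+1 - i = 2 + (d.+1 - i - 2))%N.
      by rewrite subnKC // ltn_subRL addn1 ltnS.
    rewrite exprD; apply: ler_piMr; [exact: exprn_ge0 (ltW t0) | exact: exprn_ile1 (ltW t0) t1].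
  have hx0 : 0 <= t ^+ (d.+1 - i) by rewrite exprn_ge0 // ltW.
  apply: le_trans (_ : - (`|p`_i| * t ^+ (d.+1 - i)) <= _).
    by rewrite lerN2 mulrC; apply: ler_wpM2r.
  rewrite lerNl; apply: le_trans (ler_norm _) _.
  by rewrite normrN normrM (ger0_norm hx0).
set t := T / (T + C + 1).
have hden : 0 < T + C + 1 by lra.
have tpos : 0 < t by rewrite divr_gt0.
have t1 : t <= 1 by rewrite ler_pdivrMr ?mul1r //; lra.
exists t; first by rewrite tpos t1.
apply: lt_le_trans (key t _); last by rewrite tpos t1.
have : t * C < T.
  rewrite /t mulrAC ltr_pdivrMr //; nra.
nra.
Qed.

End Poly.
Import numFieldNormedType.Exports.
Section Topo.
Variable R : realType.
Local Open Scope classical_set_scope.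

Lemma cont_sum (T : topologicalType) I (r : seq I) (P : pred I) (F : I -> T -> R) :
  (forall i, continuous (F i)) -> continuous (fun x => \sum_(i <- r | P i) F i x).
Proof.
move=> hF; elim: r => [|i r IH].
  have -> : (fun x => \sum_(i <- [::] | P i) F i x) = fun=> 0 by apply/funext => x; rewrite big_nil.
  exact: cst_continuous.
case hP : (P i).
  have -> : (fun x => \sum_(j <- i :: r | P j) F j x) =
            (F i + (fun x => \sum_(j <- r | P j) F j x)) by apply/funext => x; rewrite big_cons hP.
  by move=> x; apply: continuousD; [exact: hF | exact: IH].
have -> : (fun x => \sum_(j <- i :: r | P j) F j x) =
          (fun x => \sum_(j <- r | P j) F j x) by apply/funext => x; rewrite big_cons hP.
exact: IH.
Qed.

Lemma cont_prod (T : topologicalType) I (r : seq I) (P : pred I) (F : I -> T -> R) :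
  (forall i, continuous (F i)) -> continuous (fun x => \prod_(i <- r | P i) F i x).
Proof.
move=> hF; elim: r => [|i r IH].
  have -> : (fun x => \prod_(i <- [::] | P i) F i x) = fun=> 1 by apply/funext => x; rewrite big_nil.
  exact: cst_continuous.
case hP : (P i).
  have -> : (fun x => \prod_(j <- i :: r | P j) F j x) =
            (F i \* (fun x => \prod_(j <- r | P j) F j x)) by apply/funext => x; rewrite big_cons hP.
  by move=> x; apply: continuousM; [exact: hF | exact: IH].
have -> : (fun x => \prod_(j <- i :: r | P j) F j x) =
          (fun x => \prod_(j <- r | P j) F j x) by apply/funext => x; rewrite big_cons hP.
exact: IH.
Qed.

Lemma cont_mulc (T : topologicalType) (c : R) (f : T -> R) :
  continuous f -> continuous (fun x => c * f x).
Proof.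
move=> hf; have -> : (fun x => c * f x) = ((fun=> c) \* f) by [].
by move=> x; apply: continuousM; [exact: cst_continuous | exact: hf].
Qed.

Lemma cont_det (T : topologicalType) d (G : T -> 'M[R]_d) :
  (forall i j, continuous (fun x => G x i j)) -> continuous (fun x => \det (G x)).
Proof.
move=> hG; rewrite /determinant; apply: cont_sum => s.
by apply: cont_mulc; apply: cont_prod => i; exact: hG.
Qed.

Lemma simplex_argmax n (Al : {set 'I_n}) (F : 'rV[R]_n -> R) :
  continuous F -> (exists p : 'I_n -> R, in_simplex Al p) ->
  exists2 p : 'I_n -> R, in_simplex Al p &
    forall q, in_simplex Al q -> F (\row_i q i) <= F (\row_i p i).
Proof.
move=> hF [p0 hp0].
pose S := [set v : 'rV[R]_n | in_simplex Al (fun i => v 0 i)].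
have rowK : forall q : 'I_n -> R, (fun i => (\row_j q j) 0 i) = q.
  by move=> q; apply/funext => i; rewrite mxE.
have S0 : S !=set0 by exists (\row_i p0 i); rewrite /S /= rowK.
have Scl : closed S.
  have -> : S = \bigcap_(i in [set: 'I_n]) ([set v : 'rV[R]_n | 0 <= v 0 i] `&`
      [set v : 'rV[R]_n | i \notin Al -> v 0 i = 0]) `&`
      [set v : 'rV[R]_n | \sum_i v 0 i = 1].
    apply/seteqP; split => v.
      by move=> [h1 [h2 h3]]; split => // i _; split; [exact: h1 | exact: h2].
    by move=> [h12 h3]; split; [|split] => // i; [exact: (h12 i I).1 | exact: (h12 i I).2].
  apply: closedI; last first.
    have -> : [set v : 'rV[R]_n | \sum_i v 0 i = 1] = (fun v : 'rV[R]_n => \sum_i v 0 i) @^-1` [set 1] by [].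
    apply: preimage_closed; last exact: closed_eq.
    by move=> v _; apply: cont_sum => i; exact: coord_continuous.
  apply: closed_bigI => i _; apply: closedI.
    have -> : [set v : 'rV[R]_n | 0 <= v 0 i] = (fun v : 'rV[R]_n => v 0 i) @^-1` [set x | 0 <= x] by [].
    apply: preimage_closed; last exact: closed_ge.
    by move=> v _; exact: coord_continuous.
  case hi : (i \notin Al).
    have -> : [set v : 'rV[R]_n | true -> v 0 i = 0] = (fun v : 'rV[R]_n => v 0 i) @^-1` [set 0].
      by apply/seteqP; split => v /=; [move=> h; apply: h | move=> h _].
    apply: preimage_closed; last exact: closed_eq.
    by move=> v _; exact: coord_continuous.
  have -> : [set v : 'rV[R]_n | false -> v 0 i = 0] = setT.
    by apply/seteqP; split => v //= _.
  exact: closedT.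
have Scp : compact S.
  apply: (subclosed_compact Scl (@rV_compact R n (fun _ => `[0%R, 1%R]) (fun _ => @segment_compact R 0 1))).
  move=> v [h1 [h2 h3]] i /=; rewrite in_itv /= h1 /= -h3.
  by rewrite (bigD1 i) //= lerDl sumr_ge0.
have [c cS cmax] := EVT_max_rV S0 Scp (continuous_subspaceT hF).
exists (fun i => c 0 i); first by move: cS; rewrite inE.
move=> q hq.
have -> : \row_i c 0 i = c by apply/rowP => i; rewrite mxE.
apply: cmax; rewrite inE /S /= rowK //.
Qed.

End Topo.
Section BF1.
Variable R : realType.

Lemma bf1E d (x : 'rV[R]_d) : bf 1%:M x x = \sum_i x 0 i ^+ 2.
Proof. by rewrite /bf mulmx1 mxE; apply: eq_bigr => i _; rewrite mxE expr2. Qed.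

Lemma bf1_ge0 d (x : 'rV[R]_d) : 0 <= bf 1%:M x x.
Proof. by rewrite bf1E sumr_ge0 // => i _; rewrite sqr_ge0. Qed.

Lemma nz_row d (x : 'rV[R]_d) : x != 0 -> exists i, x 0 i != 0.
Proof.
move=> xn0; apply/existsP; apply: contraNT xn0 => /existsPn h.
by apply/eqP/rowP => j; rewrite mxE; apply/eqP/negbNE; exact: h.
Qed.

Lemma bf1_gt0 d (x : 'rV[R]_d) : x != 0 -> 0 < bf 1%:M x x.
Proof.
move=> /nz_row [i xi]; rewrite bf1E (bigD1 i) //=.
have h1 : 0 < x 0 i ^+ 2 by rewrite lt_def sqr_ge0 sqrf_eq0 xi.
have h2 : 0 <= \sum_(j < d | j != i) x 0 j ^+ 2 by apply: sumr_ge0 => j _; rewrite sqr_ge0.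
lra.
Qed.

End BF1.
Section Main.
Variables (R : realType) (d n : nat) (a : 'I_n -> 'rV[R]_d) (pioff : 'I_n -> R)
  (Al : {set 'I_n}) (alpha : R).
Hypotheses (hoff : in_simplex [set: 'I_n] pioff) (Al_ne : Al != finset.set0)
  (al0 : 0 <= alpha) (al1 : alpha < 1).

Let O i := (a i)^T *m a i.
Let Voff := Vmat a pioff.
Let Mf (pi : 'I_n -> R) := (1 - alpha) *: Vmat a pi + alpha *: Voff.
Let B i := (1 - alpha) *: O i + alpha *: Voff.

Lemma O_sym i : (O i)^T = O i.
Proof. by rewrite /O trmx_mul trmxK. Qed.

Lemma O_psd i : psd (O i).
Proof. by move=> x; rewrite /O bf_outer -expr2 sqr_ge0. Qed.

Lemma Vmat_sym pi : (Vmat a pi)^T = Vmat a pi.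
Proof.
rewrite /Vmat linear_sum; apply: eq_bigr => i _.
by rewrite linearZ /= trmx_mul trmxK.
Qed.

Lemma Vmat_psd pi : (forall i, 0 <= pi i) -> psd (Vmat a pi).
Proof.
move=> hpi x; rewrite /Vmat bf_sum; apply: sumr_ge0 => i _.
by rewrite bfZ mulr_ge0 // O_psd.
Qed.

Lemma Mf_sym pi : (Mf pi)^T = Mf pi.
Proof. by rewrite /Mf linearD !linearZ /= !Vmat_sym. Qed.

Lemma Mf_psd pi : (forall i, 0 <= pi i) -> psd (Mf pi).
Proof.
move=> hpi x; rewrite /Mf bfD !bfZ addr_ge0 // mulr_ge0 //.
- by rewrite subr_ge0 ltW.
- exact: Vmat_psd.
- by apply: Vmat_psd; case: hoff.
Qed.

Lemma tr_outer (u : 'rV[R]_d) (H : 'M[R]_d) :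
  \tr (u^T *m u *m H) = (u *m H *m u^T) 0 0.
Proof.
by rewrite -mulmxA mxtrace_mulC /mxtrace big_ord1.
Qed.

Lemma tr_Mf pi (H : 'M[R]_d) : \sum_i pi i = 1 ->
  \tr (Mf pi *m H) = \sum_i pi i *
     ((1 - alpha) * (a i *m H *m (a i)^T) 0 0 + alpha * \tr (Voff *m H)).
Proof.
move=> hs.
rewrite /Mf mulmxDl -!scalemxAl mxtraceD !mxtraceZ /Vmat mulmx_suml raddf_sum /=.
rewrite mulr_sumr.
under eq_bigr do rewrite mulrDr.
rewrite big_split /= -mulr_suml hs mul1r; congr (_ + _).
apply: eq_bigr => i _.
by rewrite -scalemxAl mxtraceZ tr_outer; ring.
Qed.

Lemma weak_final (H : 'M[R]_d) pi :
  primal_feasible a pioff Al alpha H -> in_simplex Al pi ->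
  (logdetE (Mf pi) <= (- ln (\det H))%:E)%E.
Proof.
move=> [hpd hc] [hp0 [hpA hps]].
have dH := posdef_det hpd.
have htr : \tr (Mf pi *m H) <= d%:R.
  rewrite tr_Mf //; apply: (@le_trans _ _ (\sum_i pi i * d%:R)).
    apply: ler_sum => i _; have [iA|iA] := boolP (i \in Al).
      by apply: ler_wpM2l => //; exact: hc.
    by rewrite hpA // !mul0r.
  by rewrite -mulr_suml hps mul1r.
have := weak_dual (Mf_sym pi) (Mf_psd hp0) hpd htr.
rewrite /logdetE; case: ifP => [dM|_ _]; last exact: leNye.
move=> h; rewrite lee_fin -subr_le0 opprK -lnM ?posrE //.
exact: ln_le0.
Qed.


Lemma Voff_psd : psd Voff.
Proof. by apply: Vmat_psd; case: hoff. Qed.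

Lemma bf_Vmat pi x : bf (Vmat a pi) x x = \sum_j pi j * ((x *m (a j)^T) 0 0) ^+ 2.
Proof. by rewrite /Vmat bf_sum; apply: eq_bigr => j _; rewrite bfZ bf_outer expr2. Qed.

Lemma degenerate pbar : in_simplex Al pbar -> (forall i, i \in Al -> 0 < pbar i) ->
  \det (Mf pbar) = 0 ->
  forall r : R, exists H, primal_feasible a pioff Al alpha H /\ - ln (\det H) <= r.
Proof.
move=> [p0 [pA ps]] ppos /eqP /det0P [v vn0 vM] r.
have bf0 : bf (Mf pbar) v v = 0 by rewrite /bf vM mul0mx mxE.
set w := fun i => (v *m (a i)^T) 0 0.
have al1' : 0 < 1 - alpha by rewrite subr_gt0.
set S1 := \sum_j pbar j * w j ^+ 2.
set S2 := \sum_j pioff j * w j ^+ 2.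
have S1ge : 0 <= S1 by apply: sumr_ge0 => j _; rewrite mulr_ge0 ?sqr_ge0.
have S2ge : 0 <= S2 by apply: sumr_ge0 => j _; rewrite mulr_ge0 ?sqr_ge0 //; case: hoff.
have bfE' : bf (Mf pbar) v v = (1 - alpha) * S1 + alpha * S2.
  by rewrite /Mf bfD !bfZ !bf_Vmat.
have h1 : 0 <= (1 - alpha) * S1 by rewrite mulr_ge0 // ltW.
have h2 : 0 <= alpha * S2 by rewrite mulr_ge0.
have hS2 : alpha * S2 = 0 by rewrite bfE' in bf0; lra.
have hS1 : S1 = 0.
  have : (1 - alpha) * S1 = 0 by rewrite bfE' in bf0; lra.
  by move/eqP; rewrite mulf_eq0 gt_eqF //= => /eqP.
have wA : forall i, i \in Al -> w i = 0.
  move=> i iA; move/eqP: hS1; rewrite /S1 psumr_eq0 => [/allP h|j _]; last first.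
    by rewrite mulr_ge0 ?sqr_ge0.
  have := h i (mem_index_enum i); rewrite mulf_eq0 sqrf_eq0 => /orP[|/eqP //].
  by rewrite gt_eqF // ppos.
have [i0 _] := nz_row vn0.
have dpos : (0 < d)%N by apply: leq_ltn_trans (leq0n i0) (ltn_ord i0).
set Kc := fun i => (1 - alpha) * bf 1%:M (a i) (a i) + alpha * \tr Voff.
have trV : 0 <= \tr Voff by apply: sumr_ge0 => i _; apply: psd_diag; exact: Voff_psd.
have Kc0 : forall i, 0 <= Kc i by move=> i; rewrite addr_ge0 ?mulr_ge0 ?bf1_ge0 // ltW.
set c := (1 + \sum_i Kc i)^-1.
have den : 0 < 1 + \sum_i Kc i by rewrite ltr_pwDl ?sumr_ge0.
have c0 : 0 < c by rewrite invr_gt0.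
set N := bf 1%:M v v.
have N0 : 0 < N by apply: bf1_gt0.
set t := c * expR (- r) / (c ^+ d * N).
have t0 : 0 <= t by rewrite divr_ge0 ?mulr_ge0 ?exprn_ge0 ?expR_ge0 // ltW.
pose H := c *: 1%:M + t *: (v^T *m v).
have Hsym : H^T = H by rewrite /H linearD !linearZ /= trmx1 trmx_mul trmxK.
have Hpd : posdef H.
  split => // x xn0; rewrite -/(bf H x x) /H bfD !bfZ bf_outer -expr2.
  have h3 : 0 < c * bf 1%:M x x by rewrite mulr_gt0 // bf1_gt0.
  have h4 : 0 <= t * (x *m v^T) 0 0 ^+ 2 by rewrite mulr_ge0 ?sqr_ge0.
  lra.
exists H; split; first split => //.
  move=> i iA.
  have e1 : (a i *m H *m (a i)^T) 0 0 = c * bf 1%:M (a i) (a i) + t * w i ^+ 2.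
    rewrite -/(bf H (a i) (a i)) /H bfD !bfZ bf_outer -expr2; congr (_ + _ * _ ^+ 2).
    by rewrite /w tr11 trmxK.
  have e2 : \tr (Voff *m H) = c * \tr Voff + t * S2.
    rewrite /H mulmxDr -!scalemxAr mxtraceD !mxtraceZ mulmx1; congr (_ + _ * _).
    rewrite mxtrace_mulC tr_outer -/(bf Voff v v) /Voff bf_Vmat.
    by apply: eq_bigr.
  rewrite e1 e2 wA // expr0n /= mulr0 addr0.
  have -> : (1 - alpha) * (c * bf 1%:M (a i) (a i)) + alpha * (c * \tr Voff + t * S2)
            = c * Kc i + t * (alpha * S2) by rewrite /Kc; ring.
  rewrite hS2 mulr0 addr0.
  apply: (@le_trans _ _ 1); last by rewrite ler1n.
  rewrite /c ler_pdivrMl // mulr1 (bigD1 i) //=.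
  have : 0 <= \sum_(j < n | j != i) Kc j by apply: sumr_ge0 => j _.
  lra.
have detH : \det H = c ^+ d + expR (- r).
  have -> : H = c *: (1%:M + ((t / c) *: v)^T *m v).
    rewrite /H scalerDr scale_scalar_mx mulr1 linearZ /= -scalemxAl scalerA.
    by rewrite mulrCA mulfV ?gt_eqF // mulr1.
  rewrite detZ mdl linearZ /= -scalemxAr mxE -/(bf 1%:M v v).
  have -> : (v *m v^T) 0 0 = N by rewrite /N /bf mulmx1.
  rewrite /t; field.
  by rewrite !gt_eqF // exprn_gt0.
have le : expR (- r) <= \det H by rewrite detH lerDr exprn_ge0 // ltW.
rewrite lerNl -[- r]expRK ler_ln ?posrE ?expR_gt0 //.
by apply: lt_le_trans le; rewrite expR_gt0.
Qed.


Lemma det_increase' (m : nat) (K : 'M[R]_m) : 0 < \tr K ->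
  exists2 t, 0 < t <= 1 & 1 < \det (1%:M + t *: K).
Proof.
case: m K => [|m] K h; last exact: det_increase.
by rewrite /mxtrace big_ord0 ltxx in h.
Qed.

Lemma Vmat_comb ps t i :
  Vmat a (fun j => (1 - t) * ps j + t * (j == i)%:R) = (1 - t) *: Vmat a ps + t *: O i.
Proof.
rewrite /Vmat; under eq_bigr do rewrite scalerDl.
rewrite big_split /= scaler_sumr; congr (_ + _).
  by apply: eq_bigr => j _; rewrite scalerA.
rewrite (bigD1 i) //= eqxx mulr1 big1 ?addr0 // => j /negbTE ->.
by rewrite mulr0 scale0r.
Qed.

Lemma nondeg ps : in_simplex Al ps -> 0 < \det (Mf ps) ->
  (forall q, in_simplex Al q -> \det (Mf q) <= \det (Mf ps)) ->
  primal_feasible a pioff Al alpha (invmx (Mf ps)).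
Proof.
move=> [p0 [pA ps1]] dpos hmax.
set M := Mf ps.
have hM : M^T = M by apply: Mf_sym.
have hP : psd M by apply: Mf_psd.
have Mu : M \in unitmx by rewrite unitmxE unitfE gt_eqF.
set H := invmx M.
have HM : H *m M = 1%:M by rewrite /H mulVmx.
split.
  split; first by rewrite /H trmx_inv hM.
  move=> x xn0; set y := x *m H.
  have xE : x = y *m M by rewrite /y -mulmxA HM mulmx1.
  have yn0 : y != 0 by apply: contraNneq xn0 => y0; rewrite xE y0 mul0mx.
  have -> : (x *m H *m x^T) 0 0 = bf M y y.
    by rewrite -/y {1}xE trmx_mul hM /bf mulmxA.
  rewrite lt_def hP andbT; apply/eqP => h0.
  by move: xn0; rewrite xE (psd_null hM hP h0) eqxx.
move=> i iA; rewrite leNgt; apply/negP => hc.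
set K := B i *m H - 1%:M.
have trK : 0 < \tr K.
  rewrite /K raddfB /= mxtrace1 subr_gt0 /B mulmxDl -!scalemxAl mxtraceD !mxtraceZ.
  by rewrite /O tr_outer.
have [t /andP[t0 t1] hdet] := det_increase' trK.
pose q := fun j => (1 - t) * ps j + t * (j == i)%:R.
have hq : in_simplex Al q.
  split; [|split].
  - move=> j; rewrite /q addr_ge0 ?mulr_ge0 ?ler0n ?subr_ge0 // ltW //.
  - move=> j jA; rewrite /q pA // mulr0 add0r.
    have -> : (j == i) = false by apply/negbTE; apply: contraNneq jA => ->.
    by rewrite mulr0.
  - rewrite /q big_split /= -!mulr_sumr ps1 (bigD1 i) //= eqxx big1 ?addr0.
      by rewrite mulr1 mulr1 subrK.
    by move=> j /negbTE ->.
have MqE : Mf q = (1%:M + t *: K) *m M.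
  rewrite mulmxDl mul1mx -scalemxAl /K mulmxBl mul1mx -mulmxA HM mulmx1.
  rewrite /Mf /q Vmat_comb /M /Mf /B.
  apply/matrixP => k l; rewrite !mxE; ring.
have := hmax q hq; rewrite MqE det_mulmx -/M.
rewrite -[X in _ <= X]mul1r ler_pM2r //; apply/negP; rewrite -ltNge //.
Qed.

Lemma einf_ninfty (x : \bar R) : (forall r : R, (x <= r%:E)%E) -> x = -oo%E.
Proof.
case: x => [r| |] // h.
  by have := h (r - 1); rewrite lee_fin => h1; exfalso; lra.
by have := h 0.
Qed.

Lemma main_eq : primal_value a pioff Al alpha = dual_value a pioff Al alpha.
Proof.
have cAl : (0 < #|Al|)%N by rewrite card_gt0.
pose pbar := fun i => if i \in Al then (#|Al|%:R)^-1 else 0 : R.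
have hpbar : in_simplex Al pbar.
  split; [|split].
  - by move=> i; rewrite /pbar; case: ifP => // _; rewrite invr_ge0 ler0n.
  - by move=> i /negbTE; rewrite /pbar => ->.
  - rewrite -big_mkcond /= sumr_const -[in RHS](mulVf (x := #|Al|%:R)) ?mulr_natr //.
    by rewrite pnatr_eq0 -lt0n.

have ppos : forall i, i \in Al -> 0 < pbar i.
  by move=> i iA; rewrite /pbar iA invr_gt0 ltr0n.
apply/eqP; rewrite eq_le; apply/andP; split; last first.
  apply: ge_ereal_sup => _ [pi hpi <-]; apply: le_ereal_inf_tmp => _ [H hH <-].
  exact: weak_final.
have [h0|hn0] := eqVneq (\det (Mf pbar)) 0.
  suff -> : primal_value a pioff Al alpha = -oo%E by rewrite leNye.
  apply: einf_ninfty => r; have [H [hf hle]] := degenerate hpbar ppos h0 r.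
  apply: ge_ereal_inf; exists (- ln (\det H))%:E; first by exists H.
  by rewrite lee_fin.
have hF : continuous (fun v : 'rV[R]_n => \det (Mf (fun i => v 0 i))).
  apply: cont_det => i j.
  have -> : (fun v : 'rV[R]_n => Mf (fun k => v 0 k) i j) =
     (fun v : 'rV[R]_n => \sum_k ((1 - alpha) * O k i j) * v 0 k) + (fun=> alpha * Voff i j).
    apply/funext => v /=; rewrite /Mf /Vmat !mxE summxE mulr_sumr; congr (_ + _).
    by apply: eq_bigr => k _; rewrite !mxE; ring.
  move=> v; apply: continuousD; last exact: cst_continuous.
  by apply: cont_sum => k; apply: cont_mulc; exact: coord_continuous.
have [ps hps hmax] := simplex_argmax hF (ex_intro _ pbar hpbar).
have rowK : forall q : 'I_n -> R, (fun i => (\row_j q j) 0 i) = q.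
  by move=> q; apply/funext => i; rewrite mxE.
have hmax' : forall q, in_simplex Al q -> \det (Mf q) <= \det (Mf ps).
  by move=> q hq; have := hmax q hq; rewrite !rowK.
have dpos : 0 < \det (Mf ps).
  apply: lt_le_trans (hmax' _ hpbar); rewrite lt_def hn0 psd_det_ge0 //.
    exact: Mf_sym.
  by apply: Mf_psd; case: hpbar.
have hfeas := nondeg hps dpos hmax'.
apply: (@le_trans _ _ (logdetE (Mf ps))).
  apply: ge_ereal_inf; exists (- ln (\det (invmx (Mf ps))))%:E; first by exists (invmx (Mf ps)).
  rewrite /logdetE dpos det_inv lnV ?posrE // opprK //.
by apply: ereal_sup_ubound; exists ps.
Qed.

End Main.

Unset Implicit Arguments.

Theorem lemma5p1 (R : realType) (d n : nat) (a : 'I_n -> 'rV[R]_d)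
  (a_inj : injective a)
  (a_span : row_full (\matrix_(i < n) a i))
  (pioff : 'I_n -> R) (pioff_dist : in_simplex [set: 'I_n] pioff)
  (Al : {set 'I_n}) (Al_ne : Al != finset.set0)
  (alpha : R) (alpha_ge0 : 0 <= alpha) (alpha_lt1 : alpha < 1) :
  primal_value a pioff Al alpha = dual_value a pioff Al alpha.
Proof. exact: main_eq. Qed.
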